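(* Let $G$ be a simple graph with $m$ edges and girth $g(G)>3$. Then $$\gamma(G)=2EM_2(G)-\beta(G)+4EM_1(G)-2F(G)+6M_1(G)-8m.$$
   Context: All graphs are finite, simple and undirected; $d_G(v)$ is the degree of $v$. $M_1(G)=\sum_v d_G(v)^2$, $F(G)=\sum_v d_G(v)^3$. For an edge $e=uv$, $d_G(e)=d_G(u)+d_G(v)-2$. Write $e\sim f$ for two distinct edges sharing a vertex and $e\cap f$ for that vertex; sums over $e\sim f$ are over unordered pairs. $EM_1(G)=\sum_{e\in E(G)}d_G(e)^2$, $EM_2(G)=\sum_{e\sim f}d_G(e)d_G(f)$, $\beta(G)=\sum_{e\sim f}d_G(e\cap f)(d_G(e)+d_G(f))$. A vertex $v$ is incident to an edge $e=xy$ ($v\ne x,y$) if $\{vx,vy\}\cap E(G)\ne\emptyset$; $\Lambda(G)$ is the set of pairs $\{v,e\}$ with $v$ incident to $e$ in this sense; $\gamma(G)=\sum_{\{v,xy\}\in\Lambda(G)}d_G(v)[d_G(x)+d_G(y)]$. *)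

(* Defs.v *)
(* A finite simple graph is a symmetric irreflexive relation
   [adj] on a finite vertex type [T]. Edges are 2-element vertex sets. *)
From mathcomp Require Import all_boot all_order all_algebra.
Set Implicit Arguments. Unset Strict Implicit. Unset Printing Implicit Defensive.

Section Graph.
Variables (T : finType) (adj : rel T).

Definition deg (v : T) : nat := #|[set u | adj v u]|.

Definition edges : {set {set T}} :=
  [set e : {set T} | [exists x, exists y, adj x y && (e == [set x; y])]].

Definition nedges : nat := #|edges|.

Definition edeg (e : {set T}) : nat := (\sum_(x in e) deg x) - 2.

Definition adj_edge_pairs : {set {set {set T}}} :=
  [set P : {set {set T}} | [&& P \subset edges, #|P| == 2 &
                             \bigcap_(e in P) e != set0]].

Definition common_deg (P : {set {set T}}) : nat :=
  if [pick v in \bigcap_(e in P) e] is Some v then deg v else 0.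

Definition M1 : nat := \sum_(v : T) deg v ^ 2.
Definition Fidx : nat := \sum_(v : T) deg v ^ 3.
Definition EM1 : nat := \sum_(e in edges) edeg e ^ 2.
Definition EM2 : nat := \sum_(P in adj_edge_pairs) \prod_(e in P) edeg e.
Definition beta_idx : nat :=
  \sum_(P in adj_edge_pairs) common_deg P * \sum_(e in P) edeg e.

(* v incident (in the paper's sense) to edge e = xy: v ∉ {x,y} and v is
   adjacent to x or to y; Λ(G) is the set of such pairs (v,e). *)
Definition vincident (v : T) (e : {set T}) : bool :=
  (v \notin e) && [exists x in e, adj v x].

Definition gamma_idx : nat :=
  \sum_(v : T) \sum_(e in edges | vincident v e) deg v * \sum_(x in e) deg x.

Definition triangle_free : Prop :=
  forall x y z : T, adj x y -> adj y z -> adj z x -> False.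

End Graph.

(* Main.v *)
Require Import Defs.
From mathcomp Require Import all_boot all_order all_algebra.
From mathcomp Require Import ring zify.
Set Implicit Arguments. Unset Strict Implicit. Unset Printing Implicit Defensive.
Import GRing.Theory Num.Theory.
Local Open Scope ring_scope.

Lemma Posz_sum (I : finType) (P : pred I) (F : I -> nat) :
  ((\sum_(i | P i) F i)%N)%:Z = \sum_(i | P i) (F i)%:Z.
Proof. by apply: (big_morph Posz) => // a b; rewrite PoszD. Qed.

Lemma Posz_prod (I : finType) (P : pred I) (F : I -> nat) :
  ((\prod_(i | P i) F i)%N)%:Z = \prod_(i | P i) (F i)%:Z.
Proof. by apply: (big_morph Posz) => // a b; rewrite PoszM. Qed.

Lemma PoszX (n k : nat) : ((n ^ k)%N)%:Z = n%:Z ^+ k.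
Proof. by rewrite -!natz natrX. Qed.

Lemma sum_fiber (I J : finType) (P : pred I) (Q : pred J) (phi : I -> J)
  (k : nat) (F : J -> int) :
  (forall i, P i -> Q (phi i)) ->
  (forall j, Q j -> #|[set i | P i && (phi i == j)]| = k) ->
  \sum_(i | P i) F (phi i) = k%:Z * \sum_(j | Q j) F j.
Proof.
move=> PQ Hk; rewrite (partition_big phi Q) //= mulr_sumr.
apply: eq_bigr => j Qj.
rewrite (eq_bigr (fun _ => F j)); last by move=> i /andP[_ /eqP->].
have ->: \sum_(i | P i && (phi i == j)) F j = \sum_(i in [set i | P i && (phi i == j)]) F j.
  by apply: eq_bigl => i; rewrite inE.
rewrite sumr_const (Hk j Qj) -mulr_natl.
by rewrite natz.
Qed.

Lemma set2_eq (T : finType) (a b c d : T) :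
  ([set a; b] == [set c; d]) = ((a == c) && (b == d)) || ((a == d) && (b == c)).
Proof.
apply/idP/idP.
  move/eqP=> H.
  have ha : a \in [set c; d] by rewrite -H set21.
  have hb : b \in [set c; d] by rewrite -H set22.
  have hc : c \in [set a; b] by rewrite H set21.
  have hd : d \in [set a; b] by rewrite H set22.
  move: ha hb hc hd; rewrite !inE => ha hb hc hd.
  case/orP: ha=>/eqP?; case/orP: hb=>/eqP?; case/orP: hc=>/eqP?; case/orP: hd=>/eqP?;
    subst; rewrite ?eqxx ?orbT //.
by case/orP=>/andP[/eqP-> /eqP->] //; rewrite setUC.
Qed.

Lemma big2 (R : Type) (idx : R) (op : Monoid.com_law idx) (I : finType) (a b : I) (F : I -> R) :
  a != b -> \big[op/idx]_(i in [set a; b]) F i = op (F a) (F b).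
Proof.
move=> ab; rewrite big_setU1 /= ?big_set1 // inE; exact: ab.
Qed.

Section G.
Variables (T : finType) (adj : rel T).
Hypotheses (adj_sym : symmetric adj) (adj_irr : irreflexive adj)
  (tf : triangle_free adj).

Notation d x := (deg adj x)%:Z.
Definition S1 x := \sum_(y | adj x y) d y.
Definition S2 x := \sum_(y | adj x y) d y ^+ 2.

Lemma adj_neq x y : adj x y -> x != y.
Proof. by apply: contraTneq => ->; rewrite adj_irr. Qed.

Lemma deg_gt0 x y : adj x y -> (0 < deg adj x)%N.
Proof. by move=> h; apply/card_gt0P; exists y; rewrite inE. Qed.

Lemma edegE a b : adj a b -> (edeg adj [set a; b])%:Z = d a + d b - 2.
Proof.
move=> h; rewrite /edeg big2 ?adj_neq //.
have := deg_gt0 h; rewrite adj_sym in h; have := deg_gt0 h.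
move: (deg adj a) (deg adj b) => m n hm hn.
change ((m + n - 2)%N%:Z = m%:Z + n%:Z - 2%:Z).
have H2 : (2 <= m + n)%N by lia.
by rewrite -subzn // PoszD.
Qed.

Lemma sum_adj_const x (c : int) : \sum_(y | adj x y) c = c * d x.
Proof.
have ->: \sum_(y | adj x y) c = \sum_(y in [set u | adj x u]) c.
  by apply: eq_bigl => y; rewrite inE.
by rewrite sumr_const -mulr_natr natz.
Qed.

Lemma sum_quad x (c0 c1 c2 : int) :
  \sum_(y | adj x y) (c0 + c1 * d y + c2 * d y ^+ 2) = c0 * d x + c1 * S1 x + c2 * S2 x.
Proof. by rewrite !big_split /= sum_adj_const -!mulr_sumr. Qed.

Lemma sum_ne_quad x v (c0 c1 c2 : int) : adj x v ->
  \sum_(y | adj x y && (v != y)) (c0 + c1 * d y + c2 * d y ^+ 2) =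
  c0 * d x + c1 * S1 x + c2 * S2 x - (c0 + c1 * d v + c2 * d v ^+ 2).
Proof.
move=> h; rewrite -sum_quad [in RHS](bigD1 v) //=.
rewrite [RHS]addrC addKr; apply: eq_bigl => y; by rewrite eq_sym.
Qed.

Lemma sumS1 (f : T -> int) : \sum_x \sum_(y | adj x y) f y = \sum_y f y * d y.
Proof.
rewrite (exchange_big_dep xpredT) //=; apply: eq_bigr => y _.
rewrite -sum_adj_const; apply: eq_bigl => x; by rewrite adj_sym.
Qed.

Lemma in_edges a b : adj a b -> [set a; b] \in edges adj.
Proof. by move=> h; rewrite inE; apply/existsP; exists a; apply/existsP; exists b; rewrite h eqxx. Qed.

Lemma edges_fiber j : j \in edges adj ->
  #|[set p : T * T | adj p.1 p.2 && ([set p.1; p.2] == j)]| = 2%N.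
Proof.
rewrite inE => /existsP[a /existsP[b /andP[hab /eqP->]]].
rewrite (_ : [set p : T * T | _] = [set (a, b); (b, a)]).
  by rewrite cards2 xpair_eqE (negbTE (adj_neq hab)).
apply/setP => [[p q]]; rewrite !inE set2_eq /= !xpair_eqE.
apply/idP/idP; first by case/andP.
by case/orP=> /andP[/eqP-> /eqP->]; rewrite ?hab ?(adj_sym b a) ?hab ?eqxx ?orbT.
Qed.

Lemma edge_sum (F : {set T} -> int) :
  2 * \sum_(e in edges adj) F e = \sum_x \sum_(y | adj x y) F [set x; y].
Proof.
rewrite pair_big_dep /=.
rewrite (sum_fiber (P := fun p : T * T => true && adj p.1 p.2)
  (phi := fun p : T * T => [set p.1; p.2]) (Q := fun e => e \in edges adj) (k := 2%N)) //.
  by move=> p /= h; apply: in_edges.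
move=> j hj; rewrite -(edges_fiber hj); apply: eq_card => p; by rewrite !inE.
Qed.

Lemma nedgesE : 2 * (nedges adj)%:Z = \sum_x d x.
Proof.
have ->: (nedges adj)%:Z = \sum_(e in edges adj) 1 by rewrite sumr_const natz.
rewrite edge_sum; apply: eq_bigr => x _; by rewrite sum_adj_const mul1r.
Qed.

Definition Cx x := (d x - 2) ^+ 2 * d x + 2 * (d x - 2) * S1 x + S2 x.

Lemma EM1E : 2 * (EM1 adj)%:Z = \sum_x Cx x.
Proof.
rewrite /EM1 Posz_sum.
rewrite (eq_bigr (fun e => (edeg adj e)%:Z ^+ 2)); last by move=> e _; rewrite PoszX.
rewrite edge_sum; apply: eq_bigr => x _.
rewrite (eq_bigr (fun y => (d x - 2) ^+ 2 + 2 * (d x - 2) * d y + 1 * d y ^+ 2)).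
  by rewrite sum_quad /Cx; ring.
by move=> y h; rewrite edegE //; ring.
Qed.


Lemma M1E : (M1 adj)%:Z = \sum_x S1 x.
Proof.
rewrite /M1 Posz_sum /S1 sumS1; apply: eq_bigr => y _; by rewrite PoszX expr2.
Qed.

Lemma FE : (Fidx adj)%:Z = \sum_x S2 x.
Proof.
rewrite /Fidx Posz_sum /S2 sumS1; apply: eq_bigr => y _; by rewrite PoszX exprS mulrC.
Qed.

Lemma dsum x (p0 p1 p2 p3 : int) :
  \sum_(v | adj x v) \sum_(y | adj x y && (v != y)) (p0 + p1 * d v + p2 * d y + p3 * d v * d y)
  = p0 * (d x - 1) * d x + p1 * (d x - 1) * S1 x + p2 * (d x - 1) * S1 x
    + p3 * (S1 x ^+ 2 - S2 x).
Proof.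
rewrite (eq_bigr (fun v => (p0 * (d x - 1)) + (p1 * (d x - 1) + p3 * S1 x - p2) * d v
   + (p2 * S1 x) * 1 + (- p3) * d v ^+ 2)).
  rewrite !big_split /= -!mulr_sumr sum_adj_const.
  rewrite sum_adj_const /S1 /S2; ring.
move=> v h.
rewrite (eq_bigr (fun y => (p0 + p1 * d v) + (p2 + p3 * d v) * d y + 0 * d y ^+ 2)).
  by rewrite sum_ne_quad //; ring.
by move=> y _; ring.
Qed.

Definition phi2 (t : T * (T * T)) : {set {set T}} :=
  [set [set t.1; t.2.1]; [set t.1; t.2.2]].
Definition Vt (t : T * (T * T)) := adj t.1 t.2.1 && (adj t.1 t.2.2 && (t.2.1 != t.2.2)).

Ltac finish := solve [ rewrite ?eqxx ?orbT ?andbT //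
  | match goal with
    | H : is_true (adj ?a ?a) |- _ => by rewrite adj_irr in H
    | H : is_true (?a != ?a) |- _ => by rewrite eqxx in H
    end ].

Lemma phi_eq x v y x' v' y' : adj x v -> adj x y -> v != y ->
  adj x' v' -> adj x' y' -> v' != y' ->
  ([set [set x; v]; [set x; y]] == [set [set x'; v']; [set x'; y']]) =
  ((x' == x) && (((v' == v) && (y' == y)) || ((v' == y) && (y' == v)))).
Proof.
move=> h1 h2 h3 h4 h5 h6; apply/idP/idP.
  rewrite set2_eq !set2_eq.
  case/orP=> /andP[/orP[]/andP[/eqP? /eqP?] /orP[]/andP[/eqP? /eqP?]]; subst; finish.
case/andP=> /eqP-> /orP[]/andP[/eqP-> /eqP->] //.
by rewrite setUC.
Qed.

Lemma edge_at e z : e \in edges adj -> z \in e -> exists v, adj z v /\ e = [set z; v].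
Proof.
rewrite inE => /existsP[a /existsP[b /andP[hab /eqP->]]].
rewrite !inE => /orP[]/eqP->; first by exists b.
by exists a; rewrite adj_sym setUC.
Qed.

Lemma bigcap_phi t : Vt t -> \bigcap_(e in phi2 t) e = [set t.1].
Proof.
case: t => x [v y]; rewrite /Vt /phi2 /= => /and3P[h1 h2 h3].
rewrite big2; last first.
  rewrite set2_eq eqxx /= (negbTE h3) /=; apply/negP => /andP[/eqP xy _].
  by rewrite xy adj_irr in h2.
apply/setP => w; rewrite !inE.
case: eqP => [->|_] //=; apply/negP => /andP[/eqP wv /eqP wy].
by rewrite -wv wy eqxx in h3.
Qed.

Lemma common_degE t : Vt t -> common_deg adj (phi2 t) = deg adj t.1.
Proof.
move=> V; rewrite /common_deg bigcap_phi //.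
case: pickP => [w|]; first by rewrite inE => /eqP->.
by move/(_ t.1); rewrite inE eqxx.
Qed.

Lemma phi_pairs t : Vt t -> phi2 t \in adj_edge_pairs adj.
Proof.
move=> V; rewrite inE; apply/and3P; split.
- apply/subsetP => e /set2P[]->; case/and3P: V => ? ? _; exact: in_edges.
- rewrite /phi2 cards2 eqSS eqb1.
  case: t V => x [v y]; rewrite /Vt /= => /and3P[h1 h2 h3].
  rewrite set2_eq eqxx /= (negbTE h3) /=; apply/negP => /andP[/eqP xy _].
  by rewrite xy adj_irr in h2.
- rewrite bigcap_phi //; apply/set0Pn; exists t.1; by rewrite inE.
Qed.

Lemma pairs_fiber P : P \in adj_edge_pairs adj ->
  #|[set t | Vt t && (phi2 t == P)]| = 2%N.
Proof.
rewrite inE => /and3P[sub /cards2P[e [f [ef EP]]] cap]; subst P.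
have ee : e \in edges adj by apply: (subsetP sub); rewrite set21.
have fe : f \in edges adj by apply: (subsetP sub); rewrite set22.
rewrite big2 // in cap; case/set0Pn: cap => z; rewrite inE => /andP[ze zf].
case: (edge_at ee ze) => v [hv Ee]; case: (edge_at fe zf) => y [hy Ef].
subst e f.
have vy : v != y by apply: contraNneq ef => ->.
rewrite (_ : [set t | _] = [set (z, (v, y)); (z, (y, v))]).
  by rewrite cards2 !xpair_eqE eqxx (negbTE vy).
apply/setP => [[a [b c]]]; rewrite !inE !xpair_eqE.
apply/idP/idP.
  case/andP => V; rewrite eq_sym.
  case/and3P: (V) => h1 h2 h3; rewrite /phi2 /= (phi_eq hv hy vy h1 h2 h3).
  by rewrite -andb_orr.
case/orP=> /andP[/eqP-> /andP[/eqP-> /eqP->]];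
  rewrite /Vt /phi2 /= hv hy ?vy ?eqxx // eq_sym vy /=.
by rewrite setUC.
Qed.

Lemma phi_neq t : Vt t -> [set t.1; t.2.1] != [set t.1; t.2.2].
Proof.
case: t => x [v y]; rewrite /Vt /= => /and3P[h1 h2 h3].
rewrite set2_eq eqxx /= (negbTE h3) /=; apply/negP => /andP[/eqP xy _].
by rewrite xy adj_irr in h2.
Qed.

Definition closed (p0 p1 p2 p3 : int) x :=
  p0 * (d x - 1) * d x + p1 * (d x - 1) * S1 x + p2 * (d x - 1) * S1 x
    + p3 * (S1 x ^+ 2 - S2 x).

Lemma triple_dsum (p0 p1 p2 p3 : T -> int) :
  \sum_(t | Vt t) (p0 t.1 + p1 t.1 * d t.2.1 + p2 t.1 * d t.2.2 + p3 t.1 * d t.2.1 * d t.2.2)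
  = \sum_x closed (p0 x) (p1 x) (p2 x) (p3 x) x.
Proof.
under [RHS]eq_bigr => x _ do rewrite /closed -dsum.
under [RHS]eq_bigr do rewrite pair_big_dep.
by rewrite pair_big_dep.
Qed.

Lemma pairs_sum (F : {set {set T}} -> int) :
  2 * \sum_(P in adj_edge_pairs adj) F P = \sum_(t | Vt t) F (phi2 t).
Proof.
rewrite (sum_fiber (P := Vt) (phi := phi2) (Q := fun P => P \in adj_edge_pairs adj) (k := 2%N)) //.
  exact: phi_pairs.
exact: pairs_fiber.
Qed.

Lemma EM2E : 2 * (EM2 adj)%:Z =
  \sum_x closed ((d x - 2) ^+ 2) (d x - 2) (d x - 2) 1 x.
Proof.
rewrite /EM2 Posz_sum.
under eq_bigr do rewrite Posz_prod.
rewrite pairs_sum -triple_dsum; apply: eq_bigr => t V.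
rewrite /phi2 big2 ?phi_neq //.
case/and3P: V => h1 h2 _.
rewrite !edegE // /=; ring.
Qed.

Lemma betaE : 2 * (beta_idx adj)%:Z =
  \sum_x closed (2 * d x * (d x - 2)) (d x) (d x) 0 x.
Proof.
rewrite /beta_idx Posz_sum.
under eq_bigr do rewrite PoszM Posz_sum.
rewrite pairs_sum -triple_dsum; apply: eq_bigr => t V.
rewrite common_degE // /phi2 big2 ?phi_neq //.
case/and3P: V => h1 h2 _.
rewrite !edegE // /=; ring.
Qed.

Definition Pg (t : T * (T * T)) := adj t.1 t.2.1 && (adj t.2.1 t.2.2 && (t.2.2 != t.1)).
Definition phig (t : T * (T * T)) : T * {set T} := (t.1, [set t.2.1; t.2.2]).

Lemma gam_fiber j : true && ((j.2 \in edges adj) && vincident adj j.1 j.2) ->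
  #|[set t | Pg t && (phig t == j)]| = 1%N.
Proof.
case: j => w e /= /andP[ee /andP[we /existsP[x /andP[xe wx]]]].
case: (edge_at ee xe) => y [xy Ee]; subst e.
have yw : y != w.
  move: we; rewrite !inE negb_or => /andP[_]; by rewrite eq_sym.
rewrite (_ : [set t | _] = [set (w, (x, y))]) ?cards1 //.
apply/setP => [[a [b c]]]; rewrite !inE /Pg /phig /= !xpair_eqE.
apply/idP/idP.
  case/andP => /and3P[h1 h2 h3] /andP[/eqP aw]; subst a.
  rewrite set2_eq => /orP[] /andP[/eqP bb /eqP cc]; subst b c; rewrite ?eqxx //.
  by case: (tf h1 h2); rewrite adj_sym.
by case/andP=> /eqP-> /andP[/eqP-> /eqP->]; rewrite wx xy yw !eqxx.
Qed.

Lemma gammaE : (gamma_idx adj)%:Z = \sum_x closed 0 (d x) 0 1 x.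
Proof.
rewrite /gamma_idx Posz_sum.
under eq_bigr => v _ do rewrite Posz_sum.
under eq_bigr => v _ do under eq_bigr => e _ do rewrite PoszM Posz_sum.
rewrite pair_big_dep -[LHS]mul1r.
rewrite -(sum_fiber (P := Pg) (phi := phig) (k := 1%N)
  (fun j => d j.1 * \sum_(i in j.2) d i)); last first.
- exact: gam_fiber.
- case=> w [x y]; rewrite /Pg /phig /= => /and3P[h1 h2 h3].
  rewrite in_edges //= /vincident !inE negb_or (adj_neq h1) eq_sym h3 /=.
  by apply/existsP; exists x; rewrite !inE eqxx h1.
rewrite (reindex_inj (h := fun t : T * (T * T) => (t.2.1, (t.1, t.2.2)))); last first.
  by case=> a [b c] [a' [b' c']] /= [-> -> ->].
rewrite -triple_dsum.
apply: eq_big => [[x [v y]]|[x [v y]]]; rewrite /Pg /Vt /phig /=.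
  by rewrite adj_sym eq_sym.
case/and3P => h1 h2 h3; rewrite big2 ?(adj_neq h2) /=.
ring. done.
Qed.
End G.

Theorem lemma2p6 (T : finType) (adj : rel T)
  (adj_sym : symmetric adj) (adj_irr : irreflexive adj)
  (girth_gt3 : triangle_free adj) :
  (gamma_idx adj)%:Z =
    2 * (EM2 adj)%:Z - (beta_idx adj)%:Z + 4 * (EM1 adj)%:Z
    - 2 * (Fidx adj)%:Z + 6 * (M1 adj)%:Z - 8 * (nedges adj)%:Z.
Proof.
have H2 : (2 : int) != 0 by [].
apply: (mulfI H2).
have -> : 2 * (2 * (EM2 adj)%:Z - (beta_idx adj)%:Z + 4 * (EM1 adj)%:Z
    - 2 * (Fidx adj)%:Z + 6 * (M1 adj)%:Z - 8 * (nedges adj)%:Z) =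
  2 * (2 * (EM2 adj)%:Z) - 2 * (beta_idx adj)%:Z + 4 * (2 * (EM1 adj)%:Z)
    - 4 * (Fidx adj)%:Z + 8 * (M1 adj)%:Z + 4 * (M1 adj)%:Z - 8 * (2 * (nedges adj)%:Z) by ring.
have eM : (M1 adj)%:Z = \sum_x (deg adj x)%:Z ^+ 2.
  by rewrite /M1 Posz_sum; apply: eq_bigr => x _; rewrite PoszX.
rewrite [X in _ + 8 * _ + 4 * X]eM.
rewrite gammaE // EM2E // betaE // EM1E // FE // M1E // nedgesE //.
rewrite !mulr_sumr -!sumrB -!big_split /=.
rewrite -sumrB -big_split -big_split -sumrB /=.
apply: eq_bigr => x _; rewrite /closed /Cx; ring.
Qed.
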